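(* Let $M(C,\bar\xi,\pi)$ be a Myller configuration with Darboux frame $(\bar\xi,\bar\mu,\bar v)$ and invariants $G,K,T$ such that $(G(s),T(s))\neq(0,0)$ for all $s$, and let $\bar W_r$ be its unit RD-vector field. Then $C$ is a $W_r$-helix in $M$ if and only if $C$ is a $\bar\mu$-helix in $M$.
   Context: Let $C$ be a smooth curve in $E^3$ parametrized by arclength $s$; primes denote $d/ds$. A Myller configuration $M(C,\bar\xi,\pi)$ consists of a smooth unit vector field $\bar\xi$ along $C$ and a smooth oriented plane field $\pi$ with $\bar\xi\in\pi$; $\bar v$ is the unit normal of $\pi$, $\bar\mu=\bar v\times\bar\xi$, and $\bar\xi'=G\bar\mu+K\bar v$, $\bar\mu'=-G\bar\xi+T\bar v$, $\bar v'=-K\bar\xi-T\bar\mu$. The rectifying-type Darboux vector (RD-vector) is $W_r=T\bar\xi+G\bar v$, $\bar W_r=W_r/\|W_r\|$. $C$ is a $W_r$-helix if $\langle\bar W_r,\bar l_r\rangle$ is constant for some constant unit vector $\bar l_r$; $C$ is a $\bar\mu$-helix if $\langle\bar\mu,\bar d_\mu\rangle$ is constant for some constant unit vector $\bar d_\mu$. *)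

(* Defs.v *)
From Stdlib Require Import Reals.
From Coquelicot Require Import Coquelicot.
Open Scope R_scope.

Definition vec3 : Type := (R * R * R)%type.
Definition vx (u : vec3) : R := fst (fst u).
Definition vy (u : vec3) : R := snd (fst u).
Definition vz (u : vec3) : R := snd u.

Definition vadd (u w : vec3) : vec3 := (vx u + vx w, vy u + vy w, vz u + vz w).
Definition vscale (a : R) (u : vec3) : vec3 := (a * vx u, a * vy u, a * vz u).
Definition vdot (u w : vec3) : R := vx u * vx w + vy u * vy w + vz u * vz w.
Definition vcross (u w : vec3) : vec3 :=
  (vy u * vz w - vz u * vy w,
   vz u * vx w - vx u * vz w,
   vx u * vy w - vy u * vx w).
Definition vnorm (u : vec3) : R := sqrt (vdot u u).

Definition inI (a b s : R) : Prop := a < s < b.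

Definition smooth_on (a b : R) (f : R -> vec3) : Prop :=
  forall (n : nat) (s : R), inI a b s ->
    ex_derive_n (fun t => vx (f t)) n s /\
    ex_derive_n (fun t => vy (f t)) n s /\
    ex_derive_n (fun t => vz (f t)) n s.

Definition vderiv (f : R -> vec3) (s : R) (d : vec3) : Prop :=
  is_derive (fun t => vx (f t)) s (vx d) /\
  is_derive (fun t => vy (f t)) s (vy d) /\
  is_derive (fun t => vz (f t)) s (vz d).

(* The plane
   field pi is encoded by its unit normal v (pi = v^perp, oriented by v). *)
Definition myller_config (a b : R) (r xi mu v : R -> vec3) (G K T : R -> R) : Prop :=
  smooth_on a b r /\ smooth_on a b xi /\ smooth_on a b v /\
  (forall s, inI a b s ->
     (exists d, vderiv r s d /\ vnorm d = 1) /\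
     vnorm (xi s) = 1 /\ vnorm (v s) = 1 /\ vdot (xi s) (v s) = 0 /\
     mu s = vcross (v s) (xi s) /\
     vderiv xi s (vadd (vscale (G s) (mu s)) (vscale (K s) (v s))) /\
     vderiv mu s (vadd (vscale (- G s) (xi s)) (vscale (T s) (v s))) /\
     vderiv v s (vadd (vscale (- K s) (xi s)) (vscale (- T s) (mu s)))).

Definition Wr (xi v : R -> vec3) (G T : R -> R) (s : R) : vec3 :=
  vadd (vscale (T s) (xi s)) (vscale (G s) (v s)).
Definition Wr_bar (xi v : R -> vec3) (G T : R -> R) (s : R) : vec3 :=
  vscale (/ vnorm (Wr xi v G T s)) (Wr xi v G T s).

Definition is_helix_along (a b : R) (f : R -> vec3) : Prop :=
  exists (l : vec3) (c : R), vnorm l = 1 /\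
    forall s, inI a b s -> vdot (f s) l = c.

Definition Wr_helix (a b : R) (xi v : R -> vec3) (G T : R -> R) : Prop :=
  is_helix_along a b (Wr_bar xi v G T).
Definition mu_helix (a b : R) (mu : R -> vec3) : Prop :=
  is_helix_along a b mu.

(* Main.v *)
Require Import Defs.
From Stdlib Require Import Reals Lra Psatz Classical.
From Coquelicot Require Import Coquelicot.
Open Scope R_scope.

Lemma vdot_lin (a c : R) (x y l : vec3) :
  vdot (vadd (vscale a x) (vscale c y)) l = a * vdot x l + c * vdot y l.
Proof. destruct x as [[x1 x2] x3]; destruct y as [[y1 y2] y3]; destruct l as [[l1 l2] l3].
unfold vdot, vadd, vscale, vx, vy, vz; simpl; ring. Qed.

Lemma vdot_scale (a : R) (x l : vec3) : vdot (vscale a x) l = a * vdot x l.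
Proof. destruct x as [[x1 x2] x3]; destruct l as [[l1 l2] l3].
unfold vdot, vscale, vx, vy, vz; simpl; ring. Qed.

Lemma vdot_comm x y : vdot x y = vdot y x.
Proof. unfold vdot; ring. Qed.

Lemma vdot_self_nonneg x : 0 <= vdot x x.
Proof. unfold vdot; nra. Qed.

Lemma vnorm1 x : vnorm x = 1 -> vdot x x = 1.
Proof. unfold vnorm; intro H. rewrite <- (sqrt_sqrt (vdot x x)) by apply vdot_self_nonneg.
rewrite H; ring. Qed.

Lemma vnorm1' x : vdot x x = 1 -> vnorm x = 1.
Proof. unfold vnorm; intro H; rewrite H; apply sqrt_1. Qed.

Lemma cross_dot1 x y : vdot (vcross y x) x = 0.
Proof. destruct x as [[x1 x2] x3]; destruct y as [[y1 y2] y3].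
unfold vdot, vcross, vx, vy, vz; simpl; ring. Qed.
Lemma cross_dot2 x y : vdot (vcross y x) y = 0.
Proof. destruct x as [[x1 x2] x3]; destruct y as [[y1 y2] y3].
unfold vdot, vcross, vx, vy, vz; simpl; ring. Qed.

Lemma gram l y x :
  (vdot l (vcross y x))^2 =
  vdot l l * (vdot y y * vdot x x - vdot y x ^2)
  - vdot l y * (vdot y l * vdot x x - vdot y x * vdot x l)
  + vdot l x * (vdot y l * vdot y x - vdot y y * vdot x l).
Proof. destruct x as [[x1 x2] x3]; destruct y as [[y1 y2] y3]; destruct l as [[l1 l2] l3].
unfold vdot, vcross, vx, vy, vz; simpl; ring. Qed.

Lemma lagrange x y : vdot (vcross y x) (vcross y x) = vdot y y * vdot x x - vdot y x ^2.
Proof. destruct x as [[x1 x2] x3]; destruct y as [[y1 y2] y3].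
unfold vdot, vcross, vx, vy, vz; simpl; ring. Qed.

Lemma frame_facts x y : vdot x x = 1 -> vdot y y = 1 -> vdot x y = 0 ->
  vdot (vcross y x) (vcross y x) = 1 /\ (forall l, vdot x l ^2 + vdot (vcross y x) l ^2 + vdot y l ^2 = vdot l l).
Proof. intros Hx Hy Hxy. split.
- rewrite lagrange, Hx, Hy, (vdot_comm y x), Hxy; ring.
- intro l. pose proof (gram l y x) as G. rewrite Hx, Hy, (vdot_comm y x), Hxy in G.
  rewrite (vdot_comm y l), (vdot_comm x l) in G. rewrite (vdot_comm l (vcross y x)) in G. rewrite (vdot_comm x l), (vdot_comm y l). nra.
Qed.


Lemma d_eq (f : R -> R) (s d d' : R) : is_derive f s d -> d = d' -> is_derive f s d'.
Proof. intros H ->; exact H. Qed.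

Lemma dplus (f g : R -> R) s df dg : is_derive f s df -> is_derive g s dg ->
  is_derive (fun t => f t + g t) s (df + dg).
Proof. intros; apply (is_derive_plus f g); auto. Qed.

Lemma dmult (f g : R -> R) s df dg : is_derive f s df -> is_derive g s dg ->
  is_derive (fun t => f t * g t) s (df * g s + f s * dg).
Proof. intros; apply (is_derive_mult f g); auto. intros; apply Rmult_comm. Qed.

Lemma dopp (f : R -> R) s df : is_derive f s df -> is_derive (fun t => - f t) s (- df).
Proof. intros; apply (is_derive_opp f); auto. Qed.

Lemma dconst (c : R) s : is_derive (fun _ => c) s 0.
Proof. apply (is_derive_const c). Qed.

Lemma vderiv_dot_const f s df l : vderiv f s df ->
  is_derive (fun t => vdot (f t) l) s (vdot df l).
Proof. intros [H1 [H2 H3]]. unfold vdot.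
eapply d_eq.
apply dplus; [apply dplus|]; apply dmult; eauto; apply dconst.
cbv beta; ring. Qed.

Lemma vderiv_dot f g s df dg : vderiv f s df -> vderiv g s dg ->
  is_derive (fun t => vdot (f t) (g t)) s (vdot df (g s) + vdot (f s) dg).
Proof. intros [H1 [H2 H3]] [K1 [K2 K3]]. unfold vdot.
eapply d_eq.
apply dplus; [apply dplus|]; apply dmult; eauto.
cbv beta; ring. Qed.

Lemma cplus (f g : R -> R) s : continuous f s -> continuous g s ->
  continuous (fun t => f t + g t) s.
Proof. intros; apply (continuous_plus f g); auto. Qed.
Lemma cmult (f g : R -> R) s : continuous f s -> continuous g s ->
  continuous (fun t => f t * g t) s.
Proof. intros; apply (continuous_mult f g); auto. Qed.
Lemma copp (f : R -> R) s : continuous f s -> continuous (fun t => - f t) s.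
Proof. intros; apply (continuous_opp f); auto. Qed.
Lemma cconst (c : R) (s : R) : continuous (fun _ : R => c) s.
Proof. apply continuous_const. Qed.
Lemma cinv (f : R -> R) s : continuous f s -> f s <> 0 -> continuous (fun t => / f t) s.
Proof. intros; apply continuous_Rinv_comp; auto. Qed.
Lemma cderiv (f : R -> R) (s d : R) : is_derive f s d -> continuous f s.
Proof. intros H; apply (ex_derive_continuous f s); exists d; exact H. Qed.

Definition vcont (f : R -> vec3) s := continuous (fun t => vx (f t)) s /\
  continuous (fun t => vy (f t)) s /\ continuous (fun t => vz (f t)) s.

Lemma vcont_deriv f s d : vderiv f s d -> vcont f s.
Proof. intros [H1 [H2 H3]]; repeat split; eapply cderiv; eauto. Qed.

Lemma vcont_dot f g s : vcont f s -> vcont g s -> continuous (fun t => vdot (f t) (g t)) s.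
Proof. intros [H1 [H2 H3]] [K1 [K2 K3]]; unfold vdot.
apply cplus; [apply cplus|]; apply cmult; auto. Qed.

Lemma vcont_lin (p q : R -> R) f g s : continuous p s -> continuous q s -> vcont f s -> vcont g s ->
  vcont (fun t => vadd (vscale (p t) (f t)) (vscale (q t) (g t))) s.
Proof. intros Hp Hq [H1 [H2 H3]] [K1 [K2 K3]]; unfold vcont, vadd, vscale, vx, vy, vz; simpl.
repeat split; apply cplus; apply cmult; auto. Qed.

Lemma locI a b s : inI a b s -> locally s (inI a b).
Proof. intros [H1 H2].
assert (Hp : 0 < Rmin (s - a) (b - s)) by (apply Rmin_pos; lra).
exists (mkposreal _ Hp). intros y Hy. unfold ball in Hy; simpl in Hy.
unfold AbsRing_ball, abs, minus, plus, opp in Hy; simpl in Hy.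
pose proof (Rmin_l (s-a) (b-s)); pose proof (Rmin_r (s-a) (b-s)).
unfold inI. apply Rabs_def2 in Hy. lra. Qed.

Lemma loc_nz (f : R -> R) s : continuous f s -> f s <> 0 -> locally s (fun t => f t <> 0).
Proof. intros Hc Hn.
assert (Hp : 0 < Rabs (f s)) by (apply Rabs_pos_lt; auto).
pose proof (proj1 (continuity_pt_locally f s) (proj2 (continuity_pt_filterlim f s) Hc) (mkposreal _ Hp)) as H.
simpl in H. eapply filter_imp; [|exact H]. intros t Ht Hz. cbv beta in Ht. rewrite Hz in Ht.
rewrite Rminus_0_l, Rabs_Ropp in Ht. lra. Qed.

Lemma const_on (a b : R) (f : R -> R) :
  (forall s, inI a b s -> is_derive f s 0) ->
  forall s t, inI a b s -> inI a b t -> f t = f s.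
Proof. intros Hd s t Hs Ht.
destruct (MVT_gen f s t (fun _ => 0)) as [c [Hc Heq]].
- intros x Hx. apply Hd. unfold inI in *. pose proof (Rmin_l s t); pose proof (Rmin_r s t).
  pose proof (Rmax_l s t); pose proof (Rmax_r s t).
  destruct (Rle_dec s t); [rewrite Rmin_left in Hx by lra; rewrite Rmax_right in Hx by lra|
    rewrite Rmin_right in Hx by lra; rewrite Rmax_left in Hx by lra]; lra.
- intros x Hx. apply continuity_pt_filterlim. eapply cderiv. apply Hd.
  unfold inI in *.
  destruct (Rle_dec s t); [rewrite Rmin_left in Hx by lra; rewrite Rmax_right in Hx by lra|
    rewrite Rmin_right in Hx by lra; rewrite Rmax_left in Hx by lra]; lra.
- lra. Qed.


Definition Dv (f : R -> vec3) (t : R) : vec3 :=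
  (Derive (fun u => vx (f u)) t, Derive (fun u => vy (f u)) t, Derive (fun u => vz (f u)) t).
Definition D2v (f : R -> vec3) (t : R) : vec3 :=
  (Derive_n (fun u => vx (f u)) 2 t, Derive_n (fun u => vy (f u)) 2 t,
   Derive_n (fun u => vz (f u)) 2 t).

Lemma smooth_D1 a b f s : smooth_on a b f -> inI a b s -> vderiv f s (Dv f s).
Proof. intros H Hs. destruct (H 1%nat s Hs) as [H1 [H2 H3]].
unfold vderiv, Dv, vx, vy, vz; simpl. repeat split; apply Derive_correct; assumption. Qed.

Lemma smooth_D2 a b f s : smooth_on a b f -> inI a b s -> vderiv (Dv f) s (D2v f s).
Proof. intros H Hs. destruct (H 2%nat s Hs) as [H1 [H2 H3]].
unfold vderiv, Dv, D2v. simpl. repeat split; apply Derive_correct; assumption. Qed.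

Lemma cex (f : R -> R) (s : R) : ex_derive f s -> continuous f s.
Proof. apply (ex_derive_continuous f s). Qed.

Lemma smooth_D2c a b f s : smooth_on a b f -> inI a b s -> vcont (D2v f) s.
Proof. intros H Hs. destruct (H 3%nat s Hs) as [H1 [H2 H3]].
unfold vcont. repeat split; apply cex; assumption. Qed.

Lemma vderiv_unique f s d : vderiv f s d -> Dv f s = d.
Proof. intros [H1 [H2 H3]]. destruct d as [[d1 d2] d3]. unfold Dv.
f_equal; [f_equal|]; apply is_derive_unique; assumption. Qed.

Definition mup (xi v : R -> vec3) (G T : R -> R) t :=
  vadd (vscale (- G t) (xi t)) (vscale (T t) (v t)).
Definition dGf (xi mu v : R -> vec3) (G T : R -> R) t :=
  vdot (D2v xi t) (mu t) + vdot (Dv xi t) (mup xi v G T t).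
Definition dTf (xi mu v : R -> vec3) (G T : R -> R) t :=
  - (vdot (D2v v t) (mu t) + vdot (Dv v t) (mup xi v G T t)).
Definition msq (G T : R -> R) t := T t * T t + G t * G t.
Definition mm (G T : R -> R) t := sqrt (msq G T t).
Definition kap (xi mu v : R -> vec3) (G K T : R -> R) t :=
  (T t * dGf xi mu v G T t - G t * dTf xi mu v G T t) / msq G T t + K t.

Lemma cfg a b r xi mu v G K T s : myller_config a b r xi mu v G K T -> inI a b s ->
  vdot (xi s) (xi s) = 1 /\ vdot (v s) (v s) = 1 /\ vdot (xi s) (v s) = 0 /\
  vdot (mu s) (mu s) = 1 /\ vdot (mu s) (xi s) = 0 /\ vdot (mu s) (v s) = 0 /\
  (forall l, vdot (xi s) l ^2 + vdot (mu s) l ^2 + vdot (v s) l ^2 = vdot l l) /\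
  vderiv xi s (vadd (vscale (G s) (mu s)) (vscale (K s) (v s))) /\
  vderiv mu s (mup xi v G T s) /\
  vderiv v s (vadd (vscale (- K s) (xi s)) (vscale (- T s) (mu s))).
Proof. intros [_ [_ [_ H]]] Hs. destruct (H s Hs) as [_ [Hx [Hv [Hxv [Hmu [Dx [Dm Dv']]]]]]].
apply vnorm1 in Hx; apply vnorm1 in Hv.
destruct (frame_facts _ _ Hx Hv Hxv) as [F1 F2].
split; [exact Hx|]. split; [exact Hv|]. split; [exact Hxv|].
split; [rewrite Hmu; exact F1|]. split; [rewrite Hmu; apply cross_dot1|].
split; [rewrite Hmu; apply cross_dot2|]. split; [rewrite Hmu; exact F2|].
split; [exact Dx|]. split; [exact Dm|]. exact Dv'.
Qed.

Lemma GKT_eq a b r xi mu v G K T s : myller_config a b r xi mu v G K T -> inI a b s ->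
  G s = vdot (Dv xi s) (mu s) /\ K s = vdot (Dv xi s) (v s) /\ T s = - vdot (Dv v s) (mu s).
Proof. intros H Hs.
destruct (cfg _ _ _ _ _ _ _ _ _ _ H Hs) as [Hx [Hv [Hxv [Hmm [Hmx [Hmv [_ [Dx [_ Dv']]]]]]]]].
pose proof (smooth_D1 a b xi s (proj1 (proj2 H)) Hs) as D1.
pose proof (smooth_D1 a b v s (proj1 (proj2 (proj2 H))) Hs) as D3.
rewrite (vderiv_unique _ _ _ Dx), (vderiv_unique _ _ _ Dv').
rewrite !vdot_lin. rewrite (vdot_comm (v s) (mu s)), (vdot_comm (xi s) (mu s)).
rewrite Hmm, Hmv, Hmx, Hv.
split; [ring|split; ring]. Qed.

Lemma G_der a b r xi mu v G K T s : myller_config a b r xi mu v G K T -> inI a b s ->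
  is_derive G s (dGf xi mu v G T s).
Proof. intros H Hs.
destruct (cfg _ _ _ _ _ _ _ _ _ _ H Hs) as [_ [_ [_ [_ [_ [_ [_ [_ [Dm _]]]]]]]]].
pose proof (smooth_D2 a b xi s (proj1 (proj2 H)) Hs) as D2.
pose proof (vderiv_dot _ _ _ _ _ D2 Dm) as HD.
eapply is_derive_ext_loc; [|exact HD].
eapply filter_imp; [|exact (locI a b s Hs)]. intros t Ht.
symmetry; exact (proj1 (GKT_eq _ _ _ _ _ _ _ _ _ _ H Ht)). Qed.

Lemma T_der a b r xi mu v G K T s : myller_config a b r xi mu v G K T -> inI a b s ->
  is_derive T s (dTf xi mu v G T s).
Proof. intros H Hs.
destruct (cfg _ _ _ _ _ _ _ _ _ _ H Hs) as [_ [_ [_ [_ [_ [_ [_ [_ [Dm _]]]]]]]]].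
pose proof (smooth_D2 a b v s (proj1 (proj2 (proj2 H))) Hs) as D2.
pose proof (dopp _ _ _ (vderiv_dot _ _ _ _ _ D2 Dm)) as HD.
eapply is_derive_ext_loc; [|exact HD].
eapply filter_imp; [|exact (locI a b s Hs)]. intros t Ht.
symmetry; exact (proj2 (proj2 (GKT_eq _ _ _ _ _ _ _ _ _ _ H Ht))). Qed.

Lemma mup_cont a b r xi mu v G K T s : myller_config a b r xi mu v G K T -> inI a b s ->
  vcont (mup xi v G T) s.
Proof. intros H Hs.
destruct (cfg _ _ _ _ _ _ _ _ _ _ H Hs) as [_ [_ [_ [_ [_ [_ [_ [Dx [_ Dv']]]]]]]]].
unfold mup. apply (vcont_lin (fun t => - G t) T).
- apply copp; eapply cderiv; eapply G_der; eauto.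
- eapply cderiv; eapply T_der; eauto.
- eapply vcont_deriv; eauto.
- eapply vcont_deriv; eauto.
Qed.

Lemma dG_cont a b r xi mu v G K T s : myller_config a b r xi mu v G K T -> inI a b s ->
  continuous (dGf xi mu v G T) s.
Proof. intros H Hs.
destruct (cfg _ _ _ _ _ _ _ _ _ _ H Hs) as [_ [_ [_ [_ [_ [_ [_ [_ [Dm _]]]]]]]]].
unfold dGf. apply cplus; apply vcont_dot.
- eapply smooth_D2c; [exact (proj1 (proj2 H))|exact Hs].
- eapply vcont_deriv; eauto.
- eapply vcont_deriv; eapply smooth_D2; [exact (proj1 (proj2 H))|exact Hs].
- eapply mup_cont; eauto.
Qed.

Lemma dT_cont a b r xi mu v G K T s : myller_config a b r xi mu v G K T -> inI a b s ->
  continuous (dTf xi mu v G T) s.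
Proof. intros H Hs.
destruct (cfg _ _ _ _ _ _ _ _ _ _ H Hs) as [_ [_ [_ [_ [_ [_ [_ [_ [Dm _]]]]]]]]].
unfold dTf. apply copp; apply cplus; apply vcont_dot.
- eapply smooth_D2c; [exact (proj1 (proj2 (proj2 H)))|exact Hs].
- eapply vcont_deriv; eauto.
- eapply vcont_deriv; eapply smooth_D2; [exact (proj1 (proj2 (proj2 H)))|exact Hs].
- eapply mup_cont; eauto.
Qed.

Lemma K_cont a b r xi mu v G K T s : myller_config a b r xi mu v G K T -> inI a b s ->
  continuous K s.
Proof. intros H Hs.
destruct (cfg _ _ _ _ _ _ _ _ _ _ H Hs) as [_ [_ [_ [_ [_ [_ [_ [_ [_ Dv']]]]]]]]].
apply (continuous_ext_loc _ (fun t => vdot (Dv xi t) (v t))).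
- eapply filter_imp; [|exact (locI a b s Hs)]. intros t Ht.
  symmetry; exact (proj1 (proj2 (GKT_eq _ _ _ _ _ _ _ _ _ _ H Ht))).
- apply vcont_dot.
  + eapply vcont_deriv; eapply smooth_D2; [exact (proj1 (proj2 H))|exact Hs].
  + eapply vcont_deriv; eauto.
Qed.

Lemma msq_pos a b r xi mu v G K T s : myller_config a b r xi mu v G K T ->
  (forall s, inI a b s -> (G s, T s) <> (0, 0)) -> inI a b s -> 0 < msq G T s.
Proof. intros _ HGT Hs. unfold msq.
destruct (Req_dec (G s) 0) as [HG|HG]; destruct (Req_dec (T s) 0) as [HT|HT].
- exfalso; apply (HGT s Hs); rewrite HG, HT; reflexivity.
- nra. - nra. - nra. Qed.

Lemma kap_cont a b r xi mu v G K T s : myller_config a b r xi mu v G K T ->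
  (forall s, inI a b s -> (G s, T s) <> (0, 0)) -> inI a b s ->
  continuous (kap xi mu v G K T) s.
Proof. intros H HGT Hs.
pose proof (msq_pos _ _ _ _ _ _ _ _ _ _ H HGT Hs) as Hp.
assert (cG : continuous G s) by (eapply cderiv; eapply G_der; eauto).
assert (cT : continuous T s) by (eapply cderiv; eapply T_der; eauto).
unfold kap. apply cplus; [|eapply K_cont; eauto].
unfold Rdiv. apply cmult.
- apply cplus; [|apply copp]; apply cmult; auto.
  + eapply dG_cont; eauto.
  + eapply dT_cont; eauto.
- apply cinv; [|lra]. unfold msq. apply cplus; apply cmult; auto.
Qed.


Lemma alg_D2 (T G dT dG K al be ga m : R) : 0 < m -> m * m = T * T + G * G ->
  ((dT * al + T * (G * be + K * ga) + (dG * ga + G * (- K * al + - T * be))) * m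
   - (T * al + G * ga) * ((dT * T + T * dT + (dG * G + G * dG)) / (2 * m))) / m ^ 2
  = (- G * al + T * ga) * ((T * dG - G * dT) / (T * T + G * G) + K) / m.
Proof. intros Hm Hmm. rewrite <- Hmm.
assert (E : ((dT * al + T * (G * be + K * ga) + (dG * ga + G * (- K * al + - T * be))) * m
   - (T * al + G * ga) * ((dT * T + T * dT + (dG * G + G * dG)) / (2 * m))) / m ^ 2
  - (- G * al + T * ga) * ((T * dG - G * dT) / (m * m) + K) / m
  = (m * m - (T * T + G * G)) * (dT * al + dG * ga) / (m ^ 3)).
{ field. lra. }
assert (Z: m*m - (T*T+G*G) = 0) by lra. rewrite Z, Rmult_0_l, Rdiv_0_l in E. lra. Qed.

Definition pr (f : R -> vec3) (l : vec3) t := vdot (f t) l.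
Definition Pf (xi v : R -> vec3) (G T : R -> R) l t := T t * pr xi l t + G t * pr v l t.
Definition Qf (xi v : R -> vec3) (G T : R -> R) l t := - G t * pr xi l t + T t * pr v l t.


Lemma pr_der a b r xi mu v G K T s l : myller_config a b r xi mu v G K T -> inI a b s ->
  is_derive (pr xi l) s (G s * pr mu l s + K s * pr v l s) /\
  is_derive (pr mu l) s (Qf xi v G T l s) /\
  is_derive (pr v l) s (- K s * pr xi l s + - T s * pr mu l s).
Proof. intros H Hs.
destruct (cfg _ _ _ _ _ _ _ _ _ _ H Hs) as [_ [_ [_ [_ [_ [_ [_ [Dx [Dm Dv']]]]]]]]].
split; [|split].
- eapply d_eq; [apply (vderiv_dot_const _ _ _ l Dx)|]. rewrite vdot_lin; reflexivity.
- eapply d_eq; [apply (vderiv_dot_const _ _ _ l Dm)|]. unfold mup. rewrite vdot_lin; reflexivity.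
- eapply d_eq; [apply (vderiv_dot_const _ _ _ l Dv')|]. rewrite vdot_lin; reflexivity.
Qed.

Lemma m_der a b r xi mu v G K T s : myller_config a b r xi mu v G K T ->
  (forall s, inI a b s -> (G s, T s) <> (0, 0)) -> inI a b s ->
  is_derive (mm G T) s ((dTf xi mu v G T s * T s + T s * dTf xi mu v G T s
      + (dGf xi mu v G T s * G s + G s * dGf xi mu v G T s)) / (2 * mm G T s)).
Proof. intros H HGT Hs. unfold mm.
apply is_derive_sqrt; [|eapply msq_pos; eauto].
unfold msq. apply dplus; apply dmult; first [eapply T_der; eauto | eapply G_der; eauto]. Qed.

Lemma P_der a b r xi mu v G K T s l : myller_config a b r xi mu v G K T -> inI a b s ->
  is_derive (Pf xi v G T l) s
   (dTf xi mu v G T s * pr xi l s + T s * (G s * pr mu l s + K s * pr v l s)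
    + (dGf xi mu v G T s * pr v l s + G s * (- K s * pr xi l s + - T s * pr mu l s))).
Proof. intros H Hs. destruct (pr_der _ _ _ _ _ _ _ _ _ _ l H Hs) as [D1 [_ D3]].
unfold Pf. eapply d_eq.
{ apply dplus; apply dmult; [eapply T_der; eauto|exact D1|eapply G_der; eauto|exact D3]. }
cbv beta. ring. Qed.

Lemma Q_der a b r xi mu v G K T s l : myller_config a b r xi mu v G K T -> inI a b s ->
  is_derive (Qf xi v G T l) s
   (- dGf xi mu v G T s * pr xi l s + - G s * (G s * pr mu l s + K s * pr v l s)
    + (dTf xi mu v G T s * pr v l s + T s * (- K s * pr xi l s + - T s * pr mu l s))).
Proof. intros H Hs. destruct (pr_der _ _ _ _ _ _ _ _ _ _ l H Hs) as [D1 [_ D3]].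
unfold Qf. eapply d_eq.
{ apply dplus; apply dmult; [apply dopp; eapply G_der; eauto|exact D1|eapply T_der; eauto|exact D3]. }
cbv beta. ring. Qed.

Lemma PQ_der a b r xi mu v G K T s l : myller_config a b r xi mu v G K T ->
  (forall s, inI a b s -> (G s, T s) <> (0, 0)) -> inI a b s ->
  is_derive (fun t => Pf xi v G T l t / mm G T t) s
    (Qf xi v G T l s * kap xi mu v G K T s / mm G T s).
Proof. intros H HGT Hs.
pose proof (msq_pos _ _ _ _ _ _ _ _ _ _ H HGT Hs) as Hp.
assert (Hm : 0 < mm G T s) by (apply sqrt_lt_R0; exact Hp).
assert (Hmm : mm G T s * mm G T s = T s * T s + G s * G s) by (unfold mm; rewrite sqrt_sqrt; [unfold msq; ring|lra]).
eapply d_eq.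
- apply is_derive_div; [eapply P_der; eauto|eapply m_der; eauto|lra].
- unfold Pf, Qf, kap, msq. apply alg_D2; auto.
Qed.

Lemma Wbar_dot a b r xi mu v G K T t l : myller_config a b r xi mu v G K T -> inI a b t ->
  vdot (Wr_bar xi v G T t) l = Pf xi v G T l t / mm G T t.
Proof. intros H Ht.
destruct (cfg _ _ _ _ _ _ _ _ _ _ H Ht) as [Hx [Hv [Hxv _]]].
unfold Wr_bar, vnorm, Wr, mm, msq, Pf, pr. rewrite vdot_scale, !vdot_lin.
rewrite (vdot_comm (xi t) (vadd _ _)), (vdot_comm (v t) (vadd _ _)), !vdot_lin.
rewrite Hx, Hv, Hxv, (vdot_comm (v t) (xi t)), Hxv.
unfold Rdiv. rewrite Rmult_comm. f_equal. f_equal. f_equal. ring. Qed.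


Lemma alg_main (T G dT dG K al be ga m c : R) : 0 < m -> m * m = T * T + G * G ->
  al ^ 2 + be ^ 2 + ga ^ 2 = 1 -> - G * al + T * ga = 0 -> (T * al + G * ga) / m = c ->
  - dG * al + - G * (G * be + K * ga) + (dT * ga + T * (- K * al + - T * be)) = 0 ->
  (T * dG - G * dT) / (T * T + G * G) + K <> 0 ->
  0 < 1 - c ^ 2 /\
  ((T * dG - G * dT) / (T * T + G * G) + K) * c * be / m = - (1 - c ^ 2).
Proof. intros Hm Hmm Hs HQ HP HQ' Hk.
set (k := (T * dG - G * dT) / (T * T + G * G) + K) in *.
assert (HP' : T * al + G * ga = c * m).
{ rewrite <- HP. field. lra. }
assert (Hid : (T * al + G * ga)^2 + (- G * al + T * ga)^2 = (T*T+G*G) * (al^2 + ga^2)) by ring.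
rewrite HP', HQ, <- Hmm in Hid.
assert (Hc2 : al^2 + ga^2 = c^2).
{ assert (m * m * (al^2 + ga^2 - c^2) = 0) by nra.
  destruct (Rmult_integral _ _ H) as [H0|H0]; nra. }
assert (Hbe : be ^ 2 = 1 - c ^ 2) by lra.
assert (Hid2 : (T*T+G*G) * (- dG * al + dT * ga) = - (T * al + G * ga) * (T * dG - G * dT)
   + (- G * al + T * ga) * (G * dG + T * dT)) by ring.
rewrite HQ, HP', <- Hmm in Hid2.
assert (Hck : c * k = - m * be).
{ unfold k. rewrite <- Hmm.
  assert (E1 : - dG * al + dT * ga = - c * (T * dG - G * dT) / m) .
  { apply (Rmult_eq_reg_l (m * m)); [|nra]. rewrite Hid2. field. lra. }
  assert (E2 : - dG * al + dT * ga - (m * m) * be - K * (c * m) = 0).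
  { rewrite <- HP', Hmm. rewrite <- HQ'. ring. }
  rewrite E1 in E2.
  apply (Rmult_eq_reg_l m); [|lra].
  assert (E3 : c * m * ((T * dG - G * dT) / (m * m) + K) = - c * (T * dG - G * dT) / m * (-1) + K * (c * m)).
  { field. lra. }
  transitivity (c * m * ((T * dG - G * dT) / (m * m) + K)); [ring|]. rewrite E3. nra. }
split.
- destruct (Rle_lt_dec (1 - c^2) 0) as [Hle|Hlt]; [|exact Hlt]. exfalso.
  assert (be = 0) by nra. subst be.
  assert (c * k = 0) by lra.
  assert (c <> 0) by (intro Hc0; rewrite Hc0 in Hbe; simpl in Hbe; lra).
  apply Hk. destruct (Rmult_integral _ _ H) as [H1|H1]; [contradiction|exact H1].
- replace (k * c * be / m) with ((c * k) * be / m) by (field; lra). rewrite Hck.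
  transitivity (- (be ^ 2)); [field; lra|lra].
Qed.

Lemma alg_zero (T G al be ga m : R) : 0 < m -> m * m = T * T + G * G ->
  al ^ 2 + be ^ 2 + ga ^ 2 = 1 -> (T * al + G * ga) / m = 1 -> be = 0.
Proof. intros Hm Hmm Hs HP.
assert (HP' : T * al + G * ga = m).
{ apply (Rmult_eq_reg_r (/ m)); [|apply Rinv_neq_0_compat; lra]. rewrite Rinv_r by lra. exact HP. }
assert (Hid : (T * al + G * ga)^2 + (- G * al + T * ga)^2 = (T*T+G*G) * (al^2 + ga^2)) by ring.
rewrite HP', <- Hmm in Hid.
assert (m * m * be ^ 2 + (- G * al + T * ga)^2 = 0) by nra.
assert (H1: 0 <= m*m*be^2) by (apply Rmult_le_pos; [nra| apply pow2_ge_0]).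
assert (H2: 0 <= (-G*al + T*ga)^2) by apply pow2_ge_0.
assert (H3: m*m*be^2 = 0) by lra.
destruct (Rmult_integral _ _ H3) as [H4|H4]; [nra|]. nra. Qed.


Lemma duniq (f : R -> R) (s d1 d2 : R) : is_derive f s d1 -> is_derive f s d2 -> d1 = d2.
Proof. intros H1 H2. rewrite <- (is_derive_unique _ _ _ H1). apply is_derive_unique; exact H2. Qed.

Lemma dconst_loc (f : R -> R) (s c : R) : locally s (fun t => c = f t) -> is_derive f s 0.
Proof. intros H. apply (is_derive_ext_loc (fun _ => c) f); [exact H|apply dconst]. Qed.

Lemma m_facts a b r xi mu v G K T s : myller_config a b r xi mu v G K T ->
  (forall s, inI a b s -> (G s, T s) <> (0, 0)) -> inI a b s ->
  0 < mm G T s /\ mm G T s * mm G T s = T s * T s + G s * G s.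
Proof. intros H HGT Hs.
pose proof (msq_pos _ _ _ _ _ _ _ _ _ _ H HGT Hs) as Hp.
split; [apply sqrt_lt_R0; exact Hp|].
unfold mm; rewrite sqrt_sqrt; [unfold msq; ring|lra]. Qed.

Lemma Wbar_unit a b r xi mu v G K T t : myller_config a b r xi mu v G K T ->
  (forall s, inI a b s -> (G s, T s) <> (0, 0)) -> inI a b t ->
  vdot (Wr_bar xi v G T t) (Wr_bar xi v G T t) = 1.
Proof. intros H HGT Ht.
destruct (cfg _ _ _ _ _ _ _ _ _ _ H Ht) as [Hx [Hv [Hxv _]]].
destruct (m_facts _ _ _ _ _ _ _ _ _ _ H HGT Ht) as [Hm Hmm].
rewrite (Wbar_dot _ _ _ _ _ _ _ _ _ _ _ H Ht). unfold Pf, pr.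
rewrite (vdot_comm (xi t)), (vdot_comm (v t)).
rewrite (Wbar_dot _ _ _ _ _ _ _ _ _ _ _ H Ht), (Wbar_dot _ _ _ _ _ _ _ _ _ _ _ H Ht).
unfold Pf, pr. rewrite Hx, Hv, Hxv, (vdot_comm (v t) (xi t)), Hxv.
transitivity ((T t * T t + G t * G t) / (mm G T t * mm G T t)); [field; lra|rewrite <- Hmm; field; lra]. Qed.

Theorem theorem21 (a b : R) (r xi mu v : R -> vec3) (G K T : R -> R) :
  a < b ->
  myller_config a b r xi mu v G K T ->
  (forall s, inI a b s -> (G s, T s) <> (0, 0)) ->
  (Wr_helix a b xi v G T <-> mu_helix a b mu).
Proof.
intros Hab H HGT.
set (s0 := (a + b) / 2).
assert (Hs0 : inI a b s0) by (unfold inI, s0; lra).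
split.
- intros [l [c [Hl Hc]]].
  apply vnorm1 in Hl.
  assert (HPm : forall s, inI a b s -> Pf xi v G T l s / mm G T s = c).
  { intros s Hs. rewrite <- (Wbar_dot _ _ _ _ _ _ _ _ _ _ _ H Hs). apply Hc; exact Hs. }
  assert (HQk : forall s, inI a b s -> Qf xi v G T l s * kap xi mu v G K T s = 0).
  { intros s Hs. destruct (m_facts _ _ _ _ _ _ _ _ _ _ H HGT Hs) as [Hm _].
    assert (D0 : is_derive (fun t => Pf xi v G T l t / mm G T t) s 0).
    { apply (dconst_loc _ _ c). eapply filter_imp; [|exact (locI a b s Hs)].
      intros t Ht. symmetry; apply HPm; exact Ht. }
    pose proof (duniq _ _ _ _ D0 (PQ_der _ _ _ _ _ _ _ _ _ _ l H HGT Hs)) as E0.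
    apply (Rmult_eq_reg_r (/ mm G T s)); [|apply Rinv_neq_0_compat; lra].
    rewrite Rmult_0_l. rewrite E0. unfold Rdiv. ring. }
  assert (Hnz : forall s, inI a b s -> kap xi mu v G K T s <> 0 ->
     Qf xi v G T l s = 0 /\ 0 < 1 - c ^ 2 /\
     kap xi mu v G K T s * c * pr mu l s / mm G T s = - (1 - c ^ 2)).
  { intros s Hs Hk.
    destruct (m_facts _ _ _ _ _ _ _ _ _ _ H HGT Hs) as [Hm Hmm].
    assert (HQloc : locally s (fun t => 0 = Qf xi v G T l t)).
    { pose proof (filter_and _ _ (locI a b s Hs) (loc_nz _ s (kap_cont _ _ _ _ _ _ _ _ _ _ H HGT Hs) Hk)) as L.
      eapply filter_imp; [|exact L]. intros t [Ht Hkt].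
      pose proof (HQk t Ht) as E. destruct (Rmult_integral _ _ E); [auto|contradiction]. }
    assert (HQs : Qf xi v G T l s = 0).
    { symmetry. apply (locally_singleton _ _ HQloc). }
    pose proof (duniq _ _ _ _ (dconst_loc _ _ _ HQloc) (Q_der _ _ _ _ _ _ _ _ _ _ l H Hs)) as HQ'.
    destruct (cfg _ _ _ _ _ _ _ _ _ _ H Hs) as [_ [_ [_ [_ [_ [_ [Hproj _]]]]]]].
    pose proof (Hproj l) as Hpl. rewrite Hl in Hpl.
    pose proof (HPm s Hs) as HP.
    unfold Qf, Pf in *.
    pose proof (alg_main (T s) (G s) (dTf xi mu v G T s) (dGf xi mu v G T s) (K s)
       (pr xi l s) (pr mu l s) (pr v l s) (mm G T s) c Hm Hmm Hpl HQs HP (eq_sym HQ')) as AM.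
    unfold kap, msq in *. split; [exact HQs|]. apply AM. exact Hk. }
  pose (e := fun t => kap xi mu v G K T t * c * pr mu l t / mm G T t).
  assert (He_cont : forall t, inI a b t -> continuous e t).
  { intros t Ht. unfold e. destruct (m_facts _ _ _ _ _ _ _ _ _ _ H HGT Ht) as [Hm _].
    unfold Rdiv. apply cmult; [apply cmult; [apply cmult; [eapply kap_cont; eauto| apply cconst]|] | apply cinv; [|lra]].
    - eapply cderiv. exact (proj1 (proj2 (pr_der _ _ _ _ _ _ _ _ _ _ l H Ht))).
    - eapply cderiv. eapply m_der; eauto. }
  assert (He0 : forall t, inI a b t -> kap xi mu v G K T t = 0 -> e t = 0).
  { intros t Ht Hk. unfold e. rewrite Hk. unfold Rdiv; ring. }
  destruct (classic (exists s1, inI a b s1 /\ kap xi mu v G K T s1 <> 0)) as [[s1 [Hs1 Hk1]] | Hno].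
  + assert (Hall : forall t, inI a b t -> kap xi mu v G K T t <> 0).
    { intros t Ht Hkt.
      destruct (Hnz s1 Hs1 Hk1) as [_ [Hpos Hes1]].
      assert (He1 : e s1 = - (1 - c ^ 2)) by (unfold e; exact Hes1).
      pose proof (He0 t Ht Hkt) as Het.
      assert (Hz : exists z, inI a b z /\ e z = - (1 - c ^ 2) / 2).
      { destruct (Rlt_or_le s1 t) as [Hlt|Hle].
        - destruct (Ranalysis5.IVT_interv (fun x => e x + (1 - c ^ 2) / 2) s1 t) as [z [Hz Hez]].
          + intros x Hx. apply continuity_pt_filterlim. apply (cplus e (fun _ => (1 - c ^ 2) / 2)); [apply He_cont|apply cconst].
            unfold inI in *; lra.
          + exact Hlt.
          + cbv beta. rewrite He1. lra.
          + cbv beta. rewrite Het. lra.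
          + exists z. split; [unfold inI in *; lra|]. cbv beta in Hez. lra.
        - assert (Hlt : t < s1).
          { destruct Hle as [Hlt|Heq]; [exact Hlt|]. subst t. contradiction. }
          destruct (Ranalysis5.IVT_interv (fun x => - e x - (1 - c ^ 2) / 2) t s1) as [z [Hz Hez]].
          + intros x Hx. apply continuity_pt_filterlim.
            apply (cplus (fun x => - e x) (fun _ => - ((1 - c ^ 2) / 2))); [apply copp; apply He_cont|apply cconst].
            unfold inI in *; lra.
          + exact Hlt.
          + cbv beta. rewrite Het. lra.
          + cbv beta. rewrite He1. lra.
          + exists z. split; [unfold inI in *; lra|]. cbv beta in Hez. lra. }
      destruct Hz as [z [Hz Hez]].
      destruct (Req_dec (kap xi mu v G K T z) 0) as [Hkz|Hkz].
      - rewrite (He0 z Hz Hkz) in Hez. lra.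
      - destruct (Hnz z Hz Hkz) as [_ [_ Hez2]].
        assert (e z = - (1 - c ^ 2)) by (unfold e; exact Hez2). lra. }
    assert (HD : forall t, inI a b t -> is_derive (pr mu l) t 0).
    { intros t Ht. destruct (pr_der _ _ _ _ _ _ _ _ _ _ l H Ht) as [_ [D1 _]].
      rewrite (proj1 (Hnz t Ht (Hall t Ht))) in D1. exact D1. }
    exists l, (pr mu l s0). split; [apply vnorm1'; exact Hl|].
    intros s Hs. exact (const_on a b _ HD s0 s Hs0 Hs).
  + assert (Hall0 : forall t, inI a b t -> kap xi mu v G K T t = 0).
    { intros t Ht. destruct (Req_dec (kap xi mu v G K T t) 0) as [E|E]; [exact E|].
      exfalso; apply Hno; exists t; split; assumption. }
    pose (w := Wr_bar xi v G T s0).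
    assert (HD : forall t, inI a b t -> is_derive (fun t => Pf xi v G T w t / mm G T t) t 0).
    { intros t Ht. eapply d_eq; [apply (PQ_der _ _ _ _ _ _ _ _ _ _ w H HGT Ht)|].
      rewrite (Hall0 t Ht). unfold Rdiv; ring. }
    assert (Hw : vdot w w = 1) by (unfold w; exact (Wbar_unit a b r xi mu v G K T s0 H HGT Hs0)).
    exists w, 0. split; [apply vnorm1'; exact Hw|].
    intros s Hs. pose proof (const_on a b _ HD s0 s Hs0 Hs) as E1.
    cbv beta in E1.
    rewrite <- (Wbar_dot _ _ _ _ _ _ _ _ _ _ w H Hs0) in E1. fold w in E1. rewrite Hw in E1.
    destruct (m_facts _ _ _ _ _ _ _ _ _ _ H HGT Hs) as [Hm Hmm].
    destruct (cfg _ _ _ _ _ _ _ _ _ _ H Hs) as [_ [_ [_ [_ [_ [_ [Hproj _]]]]]]].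
    pose proof (Hproj w) as Hpw. rewrite Hw in Hpw.
    unfold Pf in E1.
    exact (alg_zero (T s) (G s) (pr xi w s) (pr mu w s) (pr v w s) (mm G T s) Hm Hmm Hpw E1).
- intros [d [c [Hd Hc]]].
  assert (HQ : forall s, inI a b s -> Qf xi v G T d s = 0).
  { intros s Hs.
    assert (D0 : is_derive (pr mu d) s 0).
    { apply (dconst_loc _ _ c). eapply filter_imp; [|exact (locI a b s Hs)].
      intros t Ht. symmetry; apply Hc; exact Ht. }
    destruct (pr_der _ _ _ _ _ _ _ _ _ _ d H Hs) as [_ [D1 _]].
    exact (duniq _ _ _ _ D1 D0). }
  assert (HD : forall s, inI a b s -> is_derive (fun t => Pf xi v G T d t / mm G T t) s 0).
  { intros s Hs. eapply d_eq; [apply (PQ_der _ _ _ _ _ _ _ _ _ _ d H HGT Hs)|].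
    rewrite HQ by exact Hs. unfold Rdiv; ring. }
  exists d, (Pf xi v G T d s0 / mm G T s0). split; [exact Hd|].
  intros s Hs. rewrite (Wbar_dot _ _ _ _ _ _ _ _ _ _ _ H Hs).
  exact (const_on a b _ HD s0 s Hs0 Hs).
Qed.
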